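(* Let ${\mathbf{X}}\in\mathbb{R}_+^{m\times n}$, ${\mathbf{A}}_1\in\mathbb{R}^{k\times m}$, ${\mathbf{A}}_2\in\mathbb{R}^{n\times k}$ with ${\mathbf{A}}_1{\mathbf{X}}{\mathbf{A}}_2$ invertible. Let ${\mathbf{Q}}_1$ be a matrix whose columns form an orthonormal basis of the column space of ${\mathbf{X}}{\mathbf{A}}_2$, and ${\mathbf{Q}}_2$ a matrix whose columns form an orthonormal basis of the row space of ${\mathbf{A}}_1{\mathbf{X}}$. Let $\lambda_1,\lambda_2\ge0$ and let $\sigma_1,\sigma_2$ satisfy $$\sigma_1\ge\max_{a,b}\big(({\mathbf{A}}_1^T{\mathbf{A}}_1)_{ab}\big)_-,\quad \sigma_1\ge\max_{a,b}\big(({\mathbf{A}}_1^T{\mathbf{A}}_1+\lambda_1({\mathbf{I}}-{\mathbf{Q}}_1{\mathbf{Q}}_1^T))_{ab}\big)_-,$$ $$\sigma_2\ge\max_{a,b}\big(({\mathbf{A}}_2{\mathbf{A}}_2^T)_{ab}\big)_-,\quad \sigma_2\ge\max_{a,b}\big(({\mathbf{A}}_2{\mathbf{A}}_2^T+\lambda_2({\mathbf{I}}-{\mathbf{Q}}_2{\mathbf{Q}}_2^T))_{ab}\big)_-.$$ Set ${\mathbf{A}}_{1,\sigma}={\mathbf{A}}_1^T{\mathbf{A}}_1+\sigma_1\mathbf{1}_m\mathbf{1}_m^T$ and ${\mathbf{A}}_{2,\sigma}={\mathbf{A}}_2{\mathbf{A}}_2^T+\sigma_2\mathbf{1}_n\mathbf{1}_n^T$.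 Then, for entrywise nonnegative ${\mathbf{U}}\in\mathbb{R}^{m\times r}$, ${\mathbf{V}}\in\mathbb{R}^{n\times r}$ (with the denominators below entrywise positive), the objective $$\|{\mathbf{A}}_1({\mathbf{X}}-{\mathbf{U}}{\mathbf{V}}^T)\|_F^2+\|({\mathbf{X}}-{\mathbf{U}}{\mathbf{V}}^T){\mathbf{A}}_2\|_F^2+\lambda_1\|({\mathbf{I}}-{\mathbf{Q}}_1{\mathbf{Q}}_1^T){\mathbf{U}}{\mathbf{V}}^T\|_F^2+\lambda_2\|{\mathbf{U}}{\mathbf{V}}^T({\mathbf{I}}-{\mathbf{Q}}_2{\mathbf{Q}}_2^T)\|_F^2+\sigma_1\|\mathbf{1}_m^T({\mathbf{X}}-{\mathbf{U}}{\mathbf{V}}^T)\|_2^2+\sigma_2\|({\mathbf{X}}-{\mathbf{U}}{\mathbf{V}}^T)\mathbf{1}_n\|_2^2$$ does not increase under each of the updates $${\mathbf{U}}\leftarrow{\mathbf{U}}\circ\frac{{\mathbf{A}}_{1,\sigma}{\mathbf{X}}{\mathbf{V}}+{\mathbf{X}}{\mathbf{A}}_{2,\sigma}{\mathbf{V}}}{({\mathbf{A}}_{1,\sigma}+\lambda_1({\mathbf{I}}-{\mathbf{Q}}_1{\mathbf{Q}}_1^T)){\mathbf{U}}{\mathbf{V}}^T{\mathbf{V}}+{\mathbf{U}}{\mathbf{V}}^T({\mathbf{A}}_{2,\sigma}+\lambda_2({\mathbf{I}}-{\mathbf{Q}}_2{\mathbf{Q}}_2^T)){\mathbf{V}}},$$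 $${\mathbf{V}}\leftarrow{\mathbf{V}}\circ\frac{{\mathbf{X}}^T{\mathbf{A}}_{1,\sigma}{\mathbf{U}}+{\mathbf{A}}_{2,\sigma}{\mathbf{X}}^T{\mathbf{U}}}{{\mathbf{V}}{\mathbf{U}}^T({\mathbf{A}}_{1,\sigma}+\lambda_1({\mathbf{I}}-{\mathbf{Q}}_1{\mathbf{Q}}_1^T)){\mathbf{U}}+({\mathbf{A}}_{2,\sigma}+\lambda_2({\mathbf{I}}-{\mathbf{Q}}_2{\mathbf{Q}}_2^T)){\mathbf{V}}{\mathbf{U}}^T{\mathbf{U}}},$$ and the updated factors remain entrywise nonnegative.
   Context: $\mathbb{R}_+^{m\times n}$ denotes entrywise nonnegative $m\times n$ matrices; $(x)_-=-\min(x,0)$; $\mathbf{1}_m$ is the all-ones vector in $\mathbb{R}^m$; $\circ$ is entrywise product and the fraction bar is entrywise division. $\|\cdot\|_F$ is the Frobenius norm, $\|\cdot\|_2$ the Euclidean norm. *)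

(* Defs.v *)
From HB Require Import structures.
From mathcomp Require Import all_boot all_order all_algebra.
Set Implicit Arguments. Unset Strict Implicit. Unset Printing Implicit Defensive.
Import Order.TTheory GRing.Theory Num.Theory.
Local Open Scope ring_scope.

Section Defs.
Variable R : realFieldType.

Definition frob2 (p q : nat) (M : 'M[R]_(p, q)) : R :=
  \sum_(i < p) \sum_(j < q) M i j ^+ 2.

Definition negpart (x : R) : R := - Num.min x 0.

Definition ones (p q : nat) : 'M[R]_(p, q) := const_mx 1.

Definition nonneg_mx (p q : nat) (M : 'M[R]_(p, q)) : Prop :=
  forall i j, 0 <= M i j.

Definition pos_mx (p q : nat) (M : 'M[R]_(p, q)) : Prop :=
  forall i j, 0 < M i j.

Definition hadamard (p q : nat) (M N : 'M[R]_(p, q)) : 'M[R]_(p, q) :=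
  \matrix_(i, j) (M i j * N i j).
Definition ediv (p q : nat) (M N : 'M[R]_(p, q)) : 'M[R]_(p, q) :=
  \matrix_(i, j) (M i j / N i j).

Definition onb_colspace (p q s : nat) (Q : 'M[R]_(p, s)) (M : 'M[R]_(p, q)) : Prop :=
  Q^T *m Q = 1%:M /\ (Q^T == M^T)%MS.

Definition onb_rowspace (p q s : nat) (Q : 'M[R]_(q, s)) (M : 'M[R]_(p, q)) : Prop :=
  Q^T *m Q = 1%:M /\ (Q^T == M)%MS.

Variables (m n k r p1 p2 : nat).
Variables (X : 'M[R]_(m, n)) (A1 : 'M[R]_(k, m)) (A2 : 'M[R]_(n, k)).
Variables (Q1 : 'M[R]_(m, p1)) (Q2 : 'M[R]_(n, p2)).
Variables (lam1 lam2 sig1 sig2 : R).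

Definition P1 : 'M[R]_m := 1%:M - Q1 *m Q1^T.
Definition P2 : 'M[R]_n := 1%:M - Q2 *m Q2^T.
Definition A1sig : 'M[R]_m := A1^T *m A1 + sig1 *: ones m m.
Definition A2sig : 'M[R]_n := A2 *m A2^T + sig2 *: ones n n.

Definition objective (U : 'M[R]_(m, r)) (V : 'M[R]_(n, r)) : R :=
  let E := X - U *m V^T in
  frob2 (A1 *m E) + frob2 (E *m A2)
  + lam1 * frob2 (P1 *m (U *m V^T)) + lam2 * frob2 (U *m V^T *m P2)
  + sig1 * frob2 (ones 1 m *m E) + sig2 * frob2 (E *m ones n 1).

Definition U_num (V : 'M[R]_(n, r)) : 'M[R]_(m, r) :=
  A1sig *m X *m V + X *m A2sig *m V.
Definition U_den (U : 'M[R]_(m, r)) (V : 'M[R]_(n, r)) : 'M[R]_(m, r) :=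
  (A1sig + lam1 *: P1) *m U *m V^T *m V + U *m V^T *m (A2sig + lam2 *: P2) *m V.
Definition U_update (U : 'M[R]_(m, r)) (V : 'M[R]_(n, r)) : 'M[R]_(m, r) :=
  hadamard U (ediv (U_num V) (U_den U V)).

Definition V_num (U : 'M[R]_(m, r)) : 'M[R]_(n, r) :=
  X^T *m A1sig *m U + A2sig *m X^T *m U.
Definition V_den (U : 'M[R]_(m, r)) (V : 'M[R]_(n, r)) : 'M[R]_(n, r) :=
  V *m U^T *m (A1sig + lam1 *: P1) *m U + (A2sig + lam2 *: P2) *m V *m U^T *m U.
Definition V_update (U : 'M[R]_(m, r)) (V : 'M[R]_(n, r)) : 'M[R]_(n, r) :=
  hadamard V (ediv (V_num U) (V_den U V)).

End Defs.

(* Main.v *)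
Require Import Defs.
From HB Require Import structures.
From mathcomp Require Import all_boot all_order all_algebra.
From mathcomp Require Import ring lra.
Import Order.TTheory GRing.Theory Num.Theory.
Local Open Scope ring_scope.
Set Implicit Arguments. Unset Strict Implicit. Unset Printing Implicit Defensive.

Section Gen.
Variable R : realFieldType.

Lemma sym_le (I : finType) (w : I -> I -> R) (t : I -> R) :
  (forall x y, w x y = w y x) -> (forall x y, 0 <= w x y) ->
  \sum_x \sum_y w x y * (t x * t y) <= \sum_x \sum_y w x y * t x ^+ 2.
Proof.
move=> ws wp.
have H : forall x y, w x y * (t x * t y) <= (w x y * t x ^+ 2 + w y x * t y ^+ 2) / 2.
  move=> x y; rewrite -(ws x y).
  have := mulr_ge0 (wp x y) (sqr_ge0 (t x - t y)).
  rewrite ler_pdivlMr ?ltr0n //; nra.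
apply: le_trans (_ : \sum_x \sum_y (w x y * t x ^+ 2 + w y x * t y ^+ 2) / 2 <= _).
  by apply: ler_sum => x _; apply: ler_sum => y _; apply: H.
have E : \sum_x \sum_y (w x y * t x ^+ 2 + w y x * t y ^+ 2) / 2 =
   ((\sum_x \sum_y w x y * t x ^+ 2) + \sum_x \sum_y w y x * t y ^+ 2) / 2.
  rewrite mulrDl !mulr_suml -big_split /=; apply: eq_bigr => x _.
  by rewrite -mulrDl -big_split /= mulr_suml.
rewrite E [X in (_ + X) / 2]exchange_big /=.
lra.
Qed.

Lemma gen_le (I : finType) (S : I -> I -> R) (u b : I -> R) :
  (forall x y, S x y = S y x) -> (forall x y, 0 <= S x y) ->
  (forall x, 0 <= u x) ->
  forall (d y : I -> R), (forall x, d x = \sum_z S x z * u z) ->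
  (forall x, 0 < d x) -> (forall x, y x = u x * (b x / d x)) ->
  \sum_x y x * (\sum_z S x z * y z) - 2 * \sum_x y x * b x
  <= \sum_x u x * (\sum_z S x z * u z) - 2 * \sum_x u x * b x.
Proof.
move=> Ss Sp up d y dE dp yE.
pose t x := b x / d x.
have bt x : b x = t x * d x by rewrite /t mulfVK // gt_eqF // dp.
have L1 : \sum_x y x * (\sum_z S x z * y z) <= \sum_x t x ^+ 2 * (u x * d x).
  have -> : \sum_x y x * (\sum_z S x z * y z) =
     \sum_x \sum_z (S x z * u x * u z) * (t x * t z).
    apply: eq_bigr => x _; rewrite mulr_sumr; apply: eq_bigr => z _.
    rewrite !yE; rewrite /t; ring.
  have -> : \sum_x t x ^+ 2 * (u x * d x) =
     \sum_x \sum_z (S x z * u x * u z) * t x ^+ 2.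
    apply: eq_bigr => x _; rewrite dE !mulr_sumr; apply: eq_bigr => z _; ring.
  apply: sym_le => x z; first by rewrite Ss; ring.
  by rewrite !mulr_ge0.
have L2 : \sum_x t x ^+ 2 * (u x * d x) - 2 * \sum_x y x * b x <=
          \sum_x u x * d x - 2 * \sum_x u x * b x.
  rewrite !mulr_sumr -!sumrB; apply: ler_sum => x _.
  rewrite yE -/(t x) (bt x).
  have := mulr_ge0 (mulr_ge0 (up x) (ltW (dp x))) (sqr_ge0 (1 - t x)).
  nra.
have -> : \sum_x u x * (\sum_z S x z * u z) = \sum_x u x * d x.
  by apply: eq_bigr => x _; rewrite dE.
apply: le_trans L2; lra.
Qed.
End Gen.


Section IP.
Variable R : realFieldType.

Definition ip (p q : nat) (M N : 'M[R]_(p, q)) : R := \tr (M^T *m N).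

Lemma ipE p q (M N : 'M[R]_(p, q)) : ip M N = \sum_i \sum_j M i j * N i j.
Proof.
rewrite /ip /mxtrace exchange_big /=; apply: eq_bigr => j _.
by rewrite mxE; apply: eq_bigr => i _; rewrite mxE.
Qed.

Lemma frob2_ip p q (M : 'M[R]_(p, q)) : frob2 M = ip M M.
Proof. by rewrite ipE /frob2; apply: eq_bigr => i _; apply: eq_bigr => j _; rewrite expr2. Qed.

Lemma ipC p q (M N : 'M[R]_(p, q)) : ip M N = ip N M.
Proof. by rewrite /ip -mxtrace_tr trmx_mul trmxK. Qed.

Lemma ipDl p q (M N P : 'M[R]_(p, q)) : ip (M + N) P = ip M P + ip N P.
Proof. by rewrite /ip linearD /= mulmxDl mxtraceD. Qed.

Lemma ipDr p q (M N P : 'M[R]_(p, q)) : ip P (M + N) = ip P M + ip P N.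
Proof. by rewrite /ip mulmxDr mxtraceD. Qed.

Lemma ipZl p q a (M N : 'M[R]_(p, q)) : ip (a *: M) N = a * ip M N.
Proof. by rewrite /ip linearZ /= -scalemxAl mxtraceZ. Qed.

Lemma ipZr p q a (M N : 'M[R]_(p, q)) : ip M (a *: N) = a * ip M N.
Proof. by rewrite /ip -scalemxAr mxtraceZ. Qed.

Lemma ipNl p q (M N : 'M[R]_(p, q)) : ip (- M) N = - ip M N.
Proof. by rewrite -scaleN1r ipZl mulN1r. Qed.

Lemma ipNr p q (M N : 'M[R]_(p, q)) : ip M (- N) = - ip M N.
Proof. by rewrite -scaleN1r ipZr mulN1r. Qed.

Lemma ipMl p q s (A : 'M[R]_(s, p)) (M : 'M[R]_(p, q)) N :
  ip (A *m M) N = ip M (A^T *m N).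
Proof. by rewrite /ip trmx_mul mulmxA. Qed.

Lemma ipMr p q s (M : 'M[R]_(p, q)) (B : 'M[R]_(q, s)) N :
  ip (M *m B) N = ip M (N *m B^T).
Proof. by rewrite /ip trmx_mul -mulmxA mxtrace_mulC mulmxA. Qed.

Lemma ip_tr p q (M N : 'M[R]_(p, q)) : ip M^T N^T = ip M N.
Proof. by rewrite /ip trmxK -mxtrace_tr trmx_mul trmxK mxtrace_mulC. Qed.

End IP.


Section Core.
Variable R : realFieldType.

Lemma ip_pair m r (M N : 'M[R]_(m, r)) :
  ip M N = \sum_(x : 'I_m * 'I_r) M x.1 x.2 * N x.1 x.2.
Proof. by rewrite ipE pair_big. Qed.

Lemma sum_pair (I J : finType) (F : I * J -> R) :
  \sum_(x : I * J) F x = \sum_i \sum_j F (i, j).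
Proof. by rewrite pair_big; apply: eq_bigr => -[]. Qed.

Lemma core m r (M : 'M[R]_m) (K L : 'M[R]_r) (U B D : 'M[R]_(m, r)) :
  M^T = M -> K^T = K -> L^T = L ->
  nonneg_mx M -> nonneg_mx K -> nonneg_mx L -> nonneg_mx U ->
  D = M *m U *m K + U *m L -> pos_mx D ->
  ip (hadamard U (ediv B D)) (M *m hadamard U (ediv B D) *m K + hadamard U (ediv B D) *m L)
   - 2 * ip (hadamard U (ediv B D)) B
  <= ip U (M *m U *m K + U *m L) - 2 * ip U B.
Proof.
move=> Mt Kt Lt Mp Kp Lp Up DE Dp.
set Y := hadamard U (ediv B D).
have Ms a b : M a b = M b a by rewrite -{1}Mt mxE.
have Ks a b : K a b = K b a by rewrite -{1}Kt mxE.
have Ls a b : L a b = L b a by rewrite -{1}Lt mxE.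
pose S (x y : 'I_m * 'I_r) := M x.1 y.1 * K y.2 x.2 + (x.1 == y.1)%:R * L y.2 x.2.
have QE (Z : 'M[R]_(m, r)) a i :
    (M *m Z *m K + Z *m L) a i = \sum_(y : 'I_m * 'I_r) S (a, i) y * Z y.1 y.2.
  rewrite /S; under eq_bigr do rewrite mulrDl.
  rewrite big_split /= !mxE !sum_pair /=; congr (_ + _).
    rewrite exchange_big /=; apply: eq_bigr => j _; rewrite !mxE mulr_suml.
    by apply: eq_bigr => b _; ring.
  rewrite [RHS](bigD1 a) //= [X in _ + X]big1 ?addr0; last first.
    move=> b nba; rewrite eq_sym (negbTE nba); apply: big1 => j _; by rewrite /= ?mulr0n !mul0r.
  by rewrite eqxx; apply: eq_bigr => j _; rewrite /= mul1r mulrC.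
have := @gen_le R _ S (fun x => U x.1 x.2) (fun x => B x.1 x.2).
move=> /(_ _ _ _ (fun x => D x.1 x.2) (fun x => Y x.1 x.2)).
have QQ (Z : 'M[R]_(m, r)) : ip Z (M *m Z *m K + Z *m L) =
    \sum_x Z x.1 x.2 * \sum_z S x z * Z z.1 z.2.
  by rewrite ip_pair; apply: eq_bigr => x _; rewrite QE -surjective_pairing.
rewrite !QQ !ip_pair; apply.
- by move=> [a i] [b j]; rewrite /S /= Ms Ks Ls eq_sym.
- move=> [a i] [b j]; rewrite /S /=; apply: addr_ge0; first by rewrite mulr_ge0.
  by rewrite mulr_ge0 // ler0n.
- by move=> x; apply: Up.
- by move=> [a i]; rewrite DE QE.
- by move=> x; apply: Dp.
- by move=> x; rewrite /Y !mxE.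
Qed.

Lemma core_nonneg m r (U B D : 'M[R]_(m, r)) :
  nonneg_mx U -> nonneg_mx B -> pos_mx D -> nonneg_mx (hadamard U (ediv B D)).
Proof.
move=> Up Bp Dp i j; rewrite !mxE; apply: mulr_ge0 => //.
by apply: divr_ge0 => //; apply: ltW.
Qed.

Lemma nonneg_mul p q s (A : 'M[R]_(p, q)) (B : 'M[R]_(q, s)) :
  nonneg_mx A -> nonneg_mx B -> nonneg_mx (A *m B).
Proof. by move=> Ap Bp i j; rewrite mxE; apply: sumr_ge0 => l _; apply: mulr_ge0. Qed.

Lemma nonneg_add p q (A B : 'M[R]_(p, q)) :
  nonneg_mx A -> nonneg_mx B -> nonneg_mx (A + B).
Proof. by move=> Ap Bp i j; rewrite mxE; apply: addr_ge0. Qed.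

Lemma nonneg_tr p q (A : 'M[R]_(p, q)) : nonneg_mx A -> nonneg_mx A^T.
Proof. by move=> Ap i j; rewrite mxE. Qed.

End Core.


Section Obj.
Variable R : realFieldType.

Lemma fA s p q (A : 'M[R]_(s, p)) (X W : 'M[R]_(p, q)) :
  frob2 (A *m (X - W)) = frob2 (A *m X) - 2 * ip (A^T *m A *m X) W + ip W (A^T *m A *m W).
Proof.
have h1 : ip (A *m X) (A *m W) = ip (A^T *m A *m X) W by rewrite ipC ipMl ipC mulmxA.
have h2 : ip (A *m W) (A *m X) = ip (A^T *m A *m X) W by rewrite ipMl ipC mulmxA.
have h3 : ip (A *m W) (A *m W) = ip W (A^T *m A *m W) by rewrite ipMl mulmxA.
rewrite frob2_ip mulmxBr ipDl !ipDr !ipNl !ipNr h1 h2 h3 -frob2_ip; ring.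
Qed.

Lemma fB s p q (B : 'M[R]_(q, s)) (X W : 'M[R]_(p, q)) :
  frob2 ((X - W) *m B) = frob2 (X *m B) - 2 * ip (X *m (B *m B^T)) W + ip W (W *m (B *m B^T)).
Proof.
have h1 : ip (X *m B) (W *m B) = ip (X *m (B *m B^T)) W by rewrite ipC ipMr ipC mulmxA.
have h2 : ip (W *m B) (X *m B) = ip (X *m (B *m B^T)) W by rewrite ipMr ipC mulmxA.
have h3 : ip (W *m B) (W *m B) = ip W (W *m (B *m B^T)) by rewrite ipMr mulmxA.
rewrite frob2_ip mulmxBl ipDl !ipDr !ipNl !ipNr h1 h2 h3 -frob2_ip; ring.
Qed.

Lemma P_idem p s (Q : 'M[R]_(p, s)) : Q^T *m Q = 1%:M ->
  (P1 Q)^T = P1 Q /\ (P1 Q)^T *m P1 Q = P1 Q.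
Proof.
move=> QQ.
have T : (P1 Q)^T = P1 Q by rewrite /P1 linearB /= trmx1 trmx_mul trmxK.
split=> //; rewrite T /P1 mulmxBl mul1mx mulmxBr mulmx1 -!mulmxA (mulmxA Q^T) QQ mul1mx.
by rewrite subrr subr0.
Qed.

Lemma P2_eq p s (Q : 'M[R]_(p, s)) : P2 Q = P1 Q.
Proof. by []. Qed.

Lemma ones_l m : (ones R 1 m)^T *m ones R 1 m = ones R m m.
Proof.
by apply/matrixP => i j; rewrite !mxE big_ord1 !mxE mulr1.
Qed.

Lemma ones_r n : ones R n 1 *m (ones R n 1)^T = ones R n n.
Proof.
by apply/matrixP => i j; rewrite !mxE big_ord1 !mxE mulr1.
Qed.

Variables (m n k r p1 p2 : nat).
Variables (X : 'M[R]_(m, n)) (A1 : 'M[R]_(k, m)) (A2 : 'M[R]_(n, k)).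
Variables (Q1 : 'M[R]_(m, p1)) (Q2 : 'M[R]_(n, p2)).
Variables (lam1 lam2 sig1 sig2 : R).
Hypothesis (HQ1 : Q1^T *m Q1 = 1%:M) (HQ2 : Q2^T *m Q2 = 1%:M).

Definition M1d := A1sig A1 sig1 + lam1 *: P1 Q1.
Definition M2d := A2sig A2 sig2 + lam2 *: P2 Q2.
Definition cst := frob2 (A1 *m X) + frob2 (X *m A2) + sig1 * frob2 (ones R 1 m *m X)
   + sig2 * frob2 (X *m ones R n 1).

Lemma objW (U : 'M[R]_(m, r)) (V : 'M[R]_(n, r)) :
  objective X A1 A2 Q1 Q2 lam1 lam2 sig1 sig2 U V =
  ip (U *m V^T) (M1d *m (U *m V^T)) + ip (U *m V^T) ((U *m V^T) *m M2d)
  - 2 * ip (A1sig A1 sig1 *m X + X *m A2sig A2 sig2) (U *m V^T) + cst.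
Proof.
rewrite /objective /cst; set W := U *m V^T.
have [_ PP1] := P_idem HQ1.
have [T2 PP2] := P_idem HQ2.
have PP2' : P2 Q2 *m (P2 Q2)^T = P2 Q2 by rewrite P2_eq T2 -{1}T2.
have fP : frob2 (P1 Q1 *m W) = ip W (P1 Q1 *m W).
  by rewrite frob2_ip ipMl mulmxA PP1.
have fQ : frob2 (W *m P2 Q2) = ip W (W *m P2 Q2).
  by rewrite frob2_ip ipMr -mulmxA PP2'.
rewrite fA fB fP fQ fA fB ones_l ones_r /M1d /M2d /A1sig /A2sig.
move: (P1 Q1) (P2 Q2) => P P'.
rewrite !mulmxDl !mulmxDr -!scalemxAl -!scalemxAr !ipDl !ipDr !ipZl !ipZr.
ring.
Qed.

End Obj.


Section Main.
Variable R : realFieldType.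

Lemma negpart_le (x s : R) : negpart x <= s -> 0 <= x + s.
Proof.
rewrite /negpart => h; have hm : Num.min x 0 <= x by rewrite ge_min lexx.
lra.
Qed.

Lemma ipTl p q (M : 'M[R]_(p, q)) (N : 'M[R]_(q, p)) : ip M^T N = ip M N^T.
Proof. by rewrite -ip_tr trmxK. Qed.

Lemma sigT p k (A : 'M[R]_(k, p)) s : (A1sig A s)^T = A1sig A s.
Proof. by rewrite /A1sig linearD linearZ /= trmx_mul trmxK trmx_const. Qed.

Lemma sig2T p k (A : 'M[R]_(p, k)) s : (A2sig A s)^T = A2sig A s.
Proof. by rewrite /A2sig linearD linearZ /= trmx_mul trmxK trmx_const. Qed.

Variables (m n k r p1 p2 : nat).
Variables (X : 'M[R]_(m, n)) (A1 : 'M[R]_(k, m)) (A2 : 'M[R]_(n, k)).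
Variables (Q1 : 'M[R]_(m, p1)) (Q2 : 'M[R]_(n, p2)).
Variables (lam1 lam2 sig1 sig2 : R).
Hypothesis (HQ1 : Q1^T *m Q1 = 1%:M) (HQ2 : Q2^T *m Q2 = 1%:M).

Let M1 := M1d A1 Q1 lam1 sig1.
Let M2 := M2d A2 Q2 lam2 sig2.

Lemma M1T : M1^T = M1.
Proof.
have [T _] := P_idem HQ1.
by rewrite /M1 /M1d linearD linearZ /= sigT T.
Qed.

Lemma M2T : M2^T = M2.
Proof.
have [T _] := P_idem HQ2.
by rewrite /M2 /M2d linearD linearZ /= sig2T P2_eq T.
Qed.

Lemma objU (Y : 'M[R]_(m, r)) (V : 'M[R]_(n, r)) :
  objective X A1 A2 Q1 Q2 lam1 lam2 sig1 sig2 Y V =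
  ip Y (M1 *m Y *m (V^T *m V) + Y *m (V^T *m M2 *m V))
  - 2 * ip Y (U_num X A1 A2 sig1 sig2 V) + cst X A1 A2 sig1 sig2.
Proof.
rewrite (objW X A1 A2 lam1 lam2 sig1 sig2 HQ1 HQ2) [ip (_ + _) _]ipC !ipMr trmxK ipDr /U_num -/M1 -/M2.
congr (ip Y _ + ip Y _ - 2 * ip Y _ + _); [by rewrite !mulmxA | by rewrite !mulmxA | by rewrite mulmxDl].
Qed.

Lemma objV (U : 'M[R]_(m, r)) (Y : 'M[R]_(n, r)) :
  objective X A1 A2 Q1 Q2 lam1 lam2 sig1 sig2 U Y =
  ip Y (M2 *m Y *m (U^T *m U) + Y *m (U^T *m M1 *m U))
  - 2 * ip Y (V_num X A1 A2 sig1 sig2 U) + cst X A1 A2 sig1 sig2.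
Proof.
rewrite (objW X A1 A2 lam1 lam2 sig1 sig2 HQ1 HQ2) [ip (_ + _) _]ipC !ipMl !ipTl ipDr /V_num -/M1 -/M2.
have e1 : (U^T *m (M1 *m (U *m Y^T)))^T = Y *m (U^T *m M1 *m U).
  by rewrite !trmx_mul !trmxK M1T !mulmxA.
have e2 : (U^T *m (U *m Y^T *m M2))^T = M2 *m Y *m (U^T *m U).
  by rewrite !trmx_mul !trmxK M2T !mulmxA.
have e3 : (U^T *m (A1sig A1 sig1 *m X + X *m A2sig A2 sig2))^T =
   X^T *m A1sig A1 sig1 *m U + A2sig A2 sig2 *m X^T *m U.
  by rewrite trmx_mul trmxK linearD /= !trmx_mul sigT sig2T mulmxDl.
by rewrite e1 e2 e3 [ip Y (Y *m _) + _]addrC.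
Qed.

End Main.


Theorem mainTheorem8 (R : realFieldType) (m n k r p1 p2 : nat)
  (X : 'M[R]_(m, n)) (A1 : 'M[R]_(k, m)) (A2 : 'M[R]_(n, k))
  (Q1 : 'M[R]_(m, p1)) (Q2 : 'M[R]_(n, p2))
  (lam1 lam2 sig1 sig2 : R) :
  nonneg_mx X ->
  A1 *m X *m A2 \in unitmx ->
  onb_colspace Q1 (X *m A2) ->
  onb_rowspace Q2 (A1 *m X) ->
  0 <= lam1 -> 0 <= lam2 ->
  (forall a b : 'I_m, negpart ((A1^T *m A1) a b) <= sig1) ->
  (forall a b : 'I_m, negpart ((A1^T *m A1 + lam1 *: P1 Q1) a b) <= sig1) ->
  (forall a b : 'I_n, negpart ((A2 *m A2^T) a b) <= sig2) ->
  (forall a b : 'I_n, negpart ((A2 *m A2^T + lam2 *: P2 Q2) a b) <= sig2) ->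
  forall (U : 'M[R]_(m, r)) (V : 'M[R]_(n, r)),
    nonneg_mx U -> nonneg_mx V ->
    (pos_mx (U_den A1 A2 Q1 Q2 lam1 lam2 sig1 sig2 U V) ->
       nonneg_mx (U_update X A1 A2 Q1 Q2 lam1 lam2 sig1 sig2 U V) /\
       objective X A1 A2 Q1 Q2 lam1 lam2 sig1 sig2
         (U_update X A1 A2 Q1 Q2 lam1 lam2 sig1 sig2 U V) V
       <= objective X A1 A2 Q1 Q2 lam1 lam2 sig1 sig2 U V) /\
    (pos_mx (V_den A1 A2 Q1 Q2 lam1 lam2 sig1 sig2 U V) ->
       nonneg_mx (V_update X A1 A2 Q1 Q2 lam1 lam2 sig1 sig2 U V) /\
       objective X A1 A2 Q1 Q2 lam1 lam2 sig1 sig2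
         U (V_update X A1 A2 Q1 Q2 lam1 lam2 sig1 sig2 U V)
       <= objective X A1 A2 Q1 Q2 lam1 lam2 sig1 sig2 U V).
Proof.
move=> Xp _ [HQ1 _] [HQ2 _] l1 l2 h1 h2 h3 h4 U V Up Vp.
have A1sp : nonneg_mx (A1sig A1 sig1).
  move=> a b; move: (negpart_le (h1 a b)); rewrite !mxE => H; lra.
have A2sp : nonneg_mx (A2sig A2 sig2).
  move=> a b; move: (negpart_le (h3 a b)); rewrite !mxE => H; lra.
have M1p : nonneg_mx (M1d A1 Q1 lam1 sig1).
  move=> a b; move: (negpart_le (h2 a b)); rewrite !mxE => H; lra.
have M2p : nonneg_mx (M2d A2 Q2 lam2 sig2).
  move=> a b; move: (negpart_le (h4 a b)); rewrite !mxE => H; lra.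
have M1t := M1T A1 lam1 sig1 HQ1.
have M2t := M2T A2 lam2 sig2 HQ2.
split.
- move=> Dp.
  have Bp : nonneg_mx (U_num X A1 A2 sig1 sig2 V).
    by rewrite /U_num; apply: nonneg_add; repeat apply: nonneg_mul.
  split; first exact: core_nonneg.
  rewrite /U_update !(objU X A1 A2 lam1 lam2 sig1 sig2 HQ1 HQ2).
  have := @core R m r (M1d A1 Q1 lam1 sig1) (V^T *m V) (V^T *m M2d A2 Q2 lam2 sig2 *m V)
     U (U_num X A1 A2 sig1 sig2 V) (U_den A1 A2 Q1 Q2 lam1 lam2 sig1 sig2 U V).
  move=> /(_ M1t) C.
  have Kt : (V^T *m V)^T = V^T *m V by rewrite trmx_mul trmxK.
  have Lt : (V^T *m M2d A2 Q2 lam2 sig2 *m V)^T = V^T *m M2d A2 Q2 lam2 sig2 *m V.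
    by rewrite !trmx_mul trmxK M2t mulmxA.
  have Kp : nonneg_mx (V^T *m V) by apply: nonneg_mul => //; apply: nonneg_tr.
  have Lp : nonneg_mx (V^T *m M2d A2 Q2 lam2 sig2 *m V).
    by repeat apply: nonneg_mul => //; apply: nonneg_tr.
  have DE : U_den A1 A2 Q1 Q2 lam1 lam2 sig1 sig2 U V =
     M1d A1 Q1 lam1 sig1 *m U *m (V^T *m V) + U *m (V^T *m M2d A2 Q2 lam2 sig2 *m V).
    by rewrite /U_den !mulmxA.
  have := C Kt Lt M1p Kp Lp Up DE Dp; lra.
- move=> Dp.
  have Bp : nonneg_mx (V_num X A1 A2 sig1 sig2 U).
    by rewrite /V_num; apply: nonneg_add; repeat apply: nonneg_mul => //; apply: nonneg_tr.
  split; first exact: core_nonneg.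
  rewrite /V_update !(objV X A1 A2 lam1 lam2 sig1 sig2 HQ1 HQ2).
  have := @core R n r (M2d A2 Q2 lam2 sig2) (U^T *m U) (U^T *m M1d A1 Q1 lam1 sig1 *m U)
     V (V_num X A1 A2 sig1 sig2 U) (V_den A1 A2 Q1 Q2 lam1 lam2 sig1 sig2 U V).
  move=> /(_ M2t) C.
  have Kt : (U^T *m U)^T = U^T *m U by rewrite trmx_mul trmxK.
  have Lt : (U^T *m M1d A1 Q1 lam1 sig1 *m U)^T = U^T *m M1d A1 Q1 lam1 sig1 *m U.
    by rewrite !trmx_mul trmxK M1t mulmxA.
  have Kp : nonneg_mx (U^T *m U) by apply: nonneg_mul => //; apply: nonneg_tr.
  have Lp : nonneg_mx (U^T *m M1d A1 Q1 lam1 sig1 *m U).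
    by repeat apply: nonneg_mul => //; apply: nonneg_tr.
  have DE : V_den A1 A2 Q1 Q2 lam1 lam2 sig1 sig2 U V =
     M2d A2 Q2 lam2 sig2 *m V *m (U^T *m U) + V *m (U^T *m M1d A1 Q1 lam1 sig1 *m U).
    by rewrite /V_den !mulmxA addrC.
  have := C Kt Lt M2p Kp Lp Vp DE Dp; lra.
Qed.
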